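(* If \(A\subseteq\operatorname{Homeo}_+(I)\) is a finite geometrically proper set of positive bump functions, then the following are equivalent: (1) \(A\) is geometrically fast; (2) every stretched transition chain \(C\) of \(A\) satisfies \(C_{\max}\le C_{\min}\prod C\); (3) every maximal stretched transition chain \(C\) of \(A\) satisfies \(C_{\max}\le C_{\min}\prod C\).
   Context: \(I=[0,1]\); homeomorphisms act on the right (\(tg\) is the image of \(t\); \(fg\) means apply \(f\) first). A positive bump is an element of \(\operatorname{Homeo}_+(I)\) whose support \(\{t: ta\neq t\}\) is a single open interval \((x,y)\) on which \(ta>t\); its transition points are \(x\) (left) and \(y\) (right). A transition point of \(A\) is one of some element of \(A\). \(A\) is geometrically proper if no point is a left transition point of two distinct elements, nor a right transition point of two distinct elements. A marking of \(A\) assigns each \(a\) a marker \(t\in\operatorname{supt}(a)\); for \(a\) with support \((x,y)\) its feet are \((x,t)\) and \([ta,y)\). \(A\) is geometrically fast if geometrically proper and some marking makes all feet pairwise disjoint. An element of \(A\) is isolated if its support contains no transition point of \(A\). A sequence \(C=(a_i\mid i\le k)\) of nonisolated elements of \(A\), \(\operatorname{supt}(a_i)=(x_i,y_i)\), is a stretched transition chain if for all \(i<k\), \(x_i<x_{i+1}<y_i<y_{i+1}\), and no transition point of \(A\) lies in any \((x_{i+1},y_i)\); maximal means maximal under containment as a subset of \(A\). \(\prod C=a_0a_1\cdots a_k\); \(C_{\min}\) (resp. \(C_{\max}\)) is the least (resp. greatest) transition point of \(A\) lying in the union of the supports of the elements of \(C\). *)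

(* Defs.v *)
From Stdlib Require Import Reals Lra List.
Import ListNotations.
Open Scope R_scope.

Definition inI (t : R) : Prop := 0 <= t <= 1.

(* Homeomorphisms act on the right: t g is written (g t).
   An element of Homeo_+(I) is represented by a function R -> R that is the
   identity outside I (so that distinct homeomorphisms are distinct functions),
   continuous, strictly increasing on I and mapping I onto I. *)
Definition homeoI (f : R -> R) : Prop :=
  (forall t, ~ inI t -> f t = t) /\
  (forall t, continuity_pt f t) /\
  (forall s t, inI s -> inI t -> s < t -> f s < f t) /\
  (forall t, inI t -> inI (f t)) /\
  (forall u, inI u -> exists t, inI t /\ f t = u).

Definition bump_supp (a : R -> R) (x y : R) : Prop :=
  0 <= x /\ x < y /\ y <= 1 /\
  (forall t, inI t -> (a t <> t <-> x < t < y)) /\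
  (forall t, x < t < y -> t < a t).

Definition positive_bump (a : R -> R) : Prop :=
  homeoI a /\ exists x y, bump_supp a x y.

(* Finite sets of homeomorphisms are given by lists (membership = In). *)
Definition hset := list (R -> R).

Definition transition_point (A : hset) (t : R) : Prop :=
  exists a x y, In a A /\ bump_supp a x y /\ (t = x \/ t = y).

Definition geometrically_proper (A : hset) : Prop :=
  (forall a b x y y', In a A -> In b A ->
     bump_supp a x y -> bump_supp b x y' -> a = b) /\
  (forall a b x x' y, In a A -> In b A ->
     bump_supp a x y -> bump_supp b x' y -> a = b).

Definition foot (a : R -> R) (m : R) (right : bool) (t : R) : Prop :=
  exists x y, bump_supp a x y /\
    (if right then a m <= t < y else x < t < m).

Definition geometrically_fast (A : hset) : Prop :=
  geometrically_proper A /\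
  exists mark : (R -> R) -> R,
    (forall a, In a A -> exists x y, bump_supp a x y /\ x < mark a < y) /\
    (forall a b (sa sb : bool) t, In a A -> In b A -> (a, sa) <> (b, sb) ->
       foot a (mark a) sa t -> foot b (mark b) sb t -> False).

Definition isolated (A : hset) (a : R -> R) : Prop :=
  forall x y, bump_supp a x y ->
    forall t, x < t < y -> ~ transition_point A t.

Definition stretched_chain (A : hset) (C : list (R -> R)) : Prop :=
  C <> [] /\
  (forall a, In a C -> In a A /\ ~ isolated A a) /\
  (forall i xi yi xj yj, (S i < length C)%nat ->
     bump_supp (nth i C id) xi yi -> bump_supp (nth (S i) C id) xj yj ->
     xi < xj /\ xj < yi /\ yi < yj /\
     (forall t, xj < t < yi -> ~ transition_point A t)).

Definition maximal_stretched_chain (A : hset) (C : list (R -> R)) : Prop :=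
  stretched_chain A C /\
  forall C', stretched_chain A C' ->
    (forall a, In a C -> In a C') -> (forall a, In a C' -> In a C).

Definition in_union_supp (C : list (R -> R)) (t : R) : Prop :=
  exists a x y, In a C /\ bump_supp a x y /\ x < t < y.

Definition is_Cmin (A : hset) (C : list (R -> R)) (t : R) : Prop :=
  transition_point A t /\ in_union_supp C t /\
  forall s, transition_point A s -> in_union_supp C s -> t <= s.

Definition is_Cmax (A : hset) (C : list (R -> R)) (t : R) : Prop :=
  transition_point A t /\ in_union_supp C t /\
  forall s, transition_point A s -> in_union_supp C s -> s <= t.

(* t (prod C) = t a_0 a_1 ... a_k : apply a_0 first *)
Definition prodC (C : list (R -> R)) (t : R) : R :=
  fold_left (fun s a => a s) C t.

Definition chain_condition (A : hset) (C : list (R -> R)) : Prop :=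
  forall tmin tmax, is_Cmin A C tmin -> is_Cmax A C tmax ->
    tmax <= prodC C tmin.

(* Main.v *)
Require Import Defs.
From Stdlib Require Import Reals List.
From Stdlib Require Import Lra Lia Classical ClassicalEpsilon.
Import ListNotations.
Open Scope R_scope.


Lemma supp_unique a x y x' y' :
  bump_supp a x y -> bump_supp a x' y' -> x = x' /\ y = y'.
Proof.
  intros [H0 [H1 [H2 [H3 H4]]]] [G0 [G1 [G2 [G3 G4]]]].
  assert (Hx : x = x').
  { destruct (Rtotal_order x x') as [Hl|[He|Hl]]; auto.
    - set (t := (x + Rmin x' y) / 2).
      assert (x < t < Rmin x' y) by (unfold t, Rmin; destruct (Rle_dec x' y); lra).
      assert (Rmin x' y <= x' /\ Rmin x' y <= y) by (unfold Rmin; destruct (Rle_dec x' y); lra).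
      assert (inI t) by (unfold inI; lra).
      assert (a t <> t) by (apply H3; auto; lra).
      apply G3 in H6; auto. lra.
    - set (t := (x' + Rmin x y') / 2).
      assert (x' < t < Rmin x y') by (unfold t, Rmin; destruct (Rle_dec x y'); lra).
      assert (Rmin x y' <= x /\ Rmin x y' <= y') by (unfold Rmin; destruct (Rle_dec x y'); lra).
      assert (inI t) by (unfold inI; lra).
      assert (a t <> t) by (apply G3; auto; lra).
      apply H3 in H6; auto. lra. }
  subst x'. split; auto.
  destruct (Rtotal_order y y') as [Hl|[He|Hl]]; auto.
  - set (t := (y + y') / 2).
    assert (inI t) by (unfold inI, t; lra).
    assert (a t <> t) by (apply G3; auto; unfold t; lra).
    apply H3 in H5; auto. unfold t in H5; lra.
  - set (t := (y + y') / 2).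
    assert (inI t) by (unfold inI, t; lra).
    assert (a t <> t) by (apply H3; auto; unfold t; lra).
    apply G3 in H5; auto. unfold t in H5; lra.
Qed.

Lemma bump_fix a x y t : bump_supp a x y -> inI t -> ~ (x < t < y) -> a t = t.
Proof.
  intros [_ [_ [_ [H3 _]]]] Ht Hn. apply NNPP. intro Hne. apply Hn. apply H3; auto.
Qed.

Lemma bump_mono a : positive_bump a -> forall s t, inI s -> inI t -> s <= t -> a s <= a t.
Proof.
  intros [[_ [_ [Hm _]]] _] s t Hs Ht Hst.
  destruct (Req_dec s t). subst; lra. left; apply Hm; auto; lra.
Qed.

Lemma bump_smono a : positive_bump a -> forall s t, inI s -> inI t -> s < t -> a s < a t.
Proof. intros [[_ [_ [Hm _]]] _]; auto. Qed.

Lemma bump_I a : positive_bump a -> forall t, inI t -> inI (a t).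
Proof. intros [[_ [_ [_ [Hm _]]]] _]; auto. Qed.

Lemma bump_in a x y t : positive_bump a -> bump_supp a x y -> x < t < y -> t < a t < y.
Proof.
  intros Hp Hb Ht. pose proof Hb as [H0 [H1 [H2 [H3 H4]]]].
  split. apply H4; auto.
  assert (a y = y). { apply (bump_fix a x y); auto. unfold inI; lra. lra. }
  assert (a t < a y) by (apply bump_smono; auto; unfold inI; lra). lra.
Qed.

Definition has_supp (a : R -> R) := exists x y, bump_supp a x y.
Definition ends (a : R -> R) : R * R :=
  match excluded_middle_informative (has_supp a) with
  | left H => let (x, Hx) := constructive_indefinite_description _ H in
              let (y, _) := constructive_indefinite_description _ Hx in (x, y)
  | right _ => (0, 0)
  end.
Definition lx a := fst (ends a).
Definition ly a := snd (ends a).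

Lemma ends_spec a : has_supp a -> bump_supp a (lx a) (ly a).
Proof.
  intro H. unfold lx, ly, ends. destruct (excluded_middle_informative (has_supp a)); [|contradiction].
  destruct (constructive_indefinite_description _ h) as [x Hx].
  destruct (constructive_indefinite_description _ Hx) as [y Hy]. simpl. auto.
Qed.

Lemma ends_eq a x y : bump_supp a x y -> lx a = x /\ ly a = y.
Proof.
  intro H. assert (has_supp a) by (exists x, y; auto).
  apply (supp_unique a); auto. apply ends_spec; auto.
Qed.

Definition PB (A : hset) := forall a, In a A -> positive_bump a.

Lemma PB_supp A a : PB A -> In a A -> bump_supp a (lx a) (ly a).
Proof. intros H Ha. apply ends_spec. apply H; auto. Qed.

Lemma PB_pos A a : PB A -> In a A -> positive_bump a.
Proof. intros H Ha; auto. Qed.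

Lemma TP_iff A t : PB A -> (transition_point A t <-> exists a, In a A /\ (t = lx a \/ t = ly a)).
Proof.
  intro HP. split.
  - intros [a [x [y [Ha [Hb He]]]]]. exists a. split; auto.
    destruct (ends_eq a x y Hb). subst; tauto.
  - intros [a [Ha He]]. exists a, (lx a), (ly a). split; auto. split; auto. apply PB_supp with A; auto.
Qed.

Lemma TP_I A t : PB A -> transition_point A t -> inI t.
Proof.
  intros HP [a [x [y [Ha [[H0 [H1 [H2 _]]] He]]]]]. unfold inI; destruct He; subst; lra.
Qed.

Lemma endsI A a : PB A -> In a A -> 0 <= lx a /\ lx a < ly a /\ ly a <= 1.
Proof. intros HP Ha. destruct (PB_supp A a HP Ha) as [? [? [? _]]]. lra. Qed.

Notation cc C i := (nth i C id).

Lemma chain_in A C a : stretched_chain A C -> In a C -> In a A /\ ~ isolated A a.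
Proof. intros [_ [H _]]; auto. Qed.

Lemma chain_nth_in A C i : stretched_chain A C -> (i < length C)%nat -> In (cc C i) A /\ ~ isolated A (cc C i).
Proof. intros H Hi. apply (chain_in A C); auto. apply nth_In; auto. Qed.

Lemma chain_link A C i : PB A -> stretched_chain A C -> (S i < length C)%nat ->
  lx (cc C i) < lx (cc C (S i)) /\ lx (cc C (S i)) < ly (cc C i) /\ ly (cc C i) < ly (cc C (S i)) /\
  (forall t, lx (cc C (S i)) < t < ly (cc C i) -> ~ transition_point A t).
Proof.
  intros HP HC Hi. pose proof HC as [_ [_ H]]. apply (H i); auto.
  apply PB_supp with A; auto; apply (chain_nth_in A C); auto; lia.
  apply PB_supp with A; auto; apply (chain_nth_in A C); auto; lia.
Qed.

Lemma chain_xmono A C i j : PB A -> stretched_chain A C -> (i < j)%nat -> (j < length C)%nat ->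
  lx (cc C i) < lx (cc C j) /\ ly (cc C i) < ly (cc C j).
Proof.
  intros HP HC Hij. induction Hij; intros Hj.
  - destruct (chain_link A C i HP HC Hj) as [? [? [? _]]]. lra.
  - destruct IHHij as [? ?]. lia. destruct (chain_link A C m HP HC Hj) as [? [? [? _]]]. lra.
Qed.

Lemma chain_xmono' A C i j : PB A -> stretched_chain A C -> (i <= j)%nat -> (j < length C)%nat ->
  lx (cc C i) <= lx (cc C j) /\ ly (cc C i) <= ly (cc C j).
Proof.
  intros HP HC Hij Hj. destruct (Nat.eq_dec i j). subst; lra.
  destruct (chain_xmono A C i j); auto. lia. lra.
Qed.

Lemma last_nth (L : list (R -> R)) d : L <> [] -> last L d = nth (pred (length L)) L d.
Proof.
  induction L as [|a L IH]; intros H. congruence.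
  destruct L as [|b L]. reflexivity.
  change (last (a :: b :: L) d) with (last (b :: L) d). rewrite IH by congruence.
  reflexivity.
Qed.

Lemma in_union_idx A C t : PB A -> stretched_chain A C -> in_union_supp C t ->
  exists j, (j < length C)%nat /\ lx (cc C j) < t < ly (cc C j).
Proof.
  intros HP HC [a [x [y [Ha [Hb Ht]]]]].
  destruct (In_nth C a id Ha) as [j [Hj Hn]]. exists j. split; auto. rewrite Hn.
  destruct (ends_eq a x y Hb). subst; lra.
Qed.

Lemma chain_nodup A C : PB A -> stretched_chain A C -> NoDup C.
Proof.
  intros HP HC. apply (NoDup_nth C id). intros i j Hi Hj He.
  destruct (Nat.lt_total i j) as [H|[H|H]]; auto.
  - destruct (chain_xmono A C i j); auto. rewrite He in *. lra.
  - destruct (chain_xmono A C j i); auto. rewrite He in *. lra.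
Qed.

Definition fast_marks (A : hset) (mark : (R -> R) -> R) :=
    (forall a, In a A -> exists x y, bump_supp a x y /\ x < mark a < y) /\
    (forall a b (sa sb : bool) t, In a A -> In b A -> (a, sa) <> (b, sb) ->
       foot a (mark a) sa t -> foot b (mark b) sb t -> False).

Lemma mark_in A mark a : PB A -> fast_marks A mark -> In a A -> lx a < mark a < ly a.
Proof.
  intros HP [H _] Ha. destruct (H a Ha) as [x [y [Hb Hm]]]. destruct (ends_eq a x y Hb). subst; lra.
Qed.

Lemma lfoot A a m t : PB A -> In a A -> lx a < t < m -> foot a m false t.
Proof. intros HP Ha Ht. exists (lx a), (ly a). split. apply PB_supp with A; auto. simpl; auto. Qed.

Lemma rfoot A a m t : PB A -> In a A -> a m <= t < ly a -> foot a m true t.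
Proof. intros HP Ha Ht. exists (lx a), (ly a). split. apply PB_supp with A; auto. simpl; auto. Qed.

Lemma mark_aI A mark a : PB A -> fast_marks A mark -> In a A -> mark a < a (mark a) < ly a.
Proof.
  intros HP HF Ha. apply bump_in with (lx a); auto. apply PB_supp with A; auto.
  apply mark_in with A; auto.
Qed.

Lemma noTP_left A mark : PB A -> fast_marks A mark -> forall a s, In a A ->
  transition_point A s -> ~ (lx a < s < mark a).
Proof.
  intros HP HF a s Ha Hs Hr. pose proof (mark_in A mark a HP HF Ha).
  apply (TP_iff A s HP) in Hs. destruct Hs as [b [Hb [He|He]]]; subst s.
  - pose proof (mark_in A mark b HP HF Hb).
    assert (a <> b) by (intro; subst; lra).
    set (t := (lx b + Rmin (mark a) (mark b)) / 2).
    assert (lx b < t < Rmin (mark a) (mark b)) by (unfold t, Rmin; destruct Rle_dec; lra).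
    assert (Rmin (mark a) (mark b) <= mark a /\ Rmin (mark a) (mark b) <= mark b) by (unfold Rmin; destruct Rle_dec; lra).
    apply (proj2 HF a b false false t Ha Hb). congruence.
    apply lfoot with A; auto; lra. apply lfoot with A; auto; lra.
  - pose proof (mark_aI A mark b HP HF Hb).
    assert (a <> b) by (intro; subst; lra).
    set (t := (Rmax (lx a) (b (mark b)) + ly b) / 2).
    assert (Rmax (lx a) (b (mark b)) < ly b) by (unfold Rmax; destruct Rle_dec; lra).
    assert (lx a <= Rmax (lx a) (b (mark b)) /\ b (mark b) <= Rmax (lx a) (b (mark b))) by (unfold Rmax; destruct Rle_dec; lra).
    apply (proj2 HF a b false true t Ha Hb). congruence.
    apply lfoot with A; auto; unfold t; lra. apply rfoot with A; auto; unfold t; lra.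
Qed.

Lemma noTP_right A mark : PB A -> fast_marks A mark -> forall a s, In a A ->
  transition_point A s -> ~ (a (mark a) < s < ly a).
Proof.
  intros HP HF a s Ha Hs Hr. pose proof (mark_aI A mark a HP HF Ha). pose proof (mark_in A mark a HP HF Ha).
  apply (TP_iff A s HP) in Hs. destruct Hs as [b [Hb [He|He]]]; subst s.
  - pose proof (mark_in A mark b HP HF Hb).
    assert (a <> b) by (intro; subst; lra).
    set (t := (lx b + Rmin (ly a) (mark b)) / 2).
    assert (lx b < t < Rmin (ly a) (mark b)) by (unfold t, Rmin; destruct Rle_dec; lra).
    assert (Rmin (ly a) (mark b) <= ly a /\ Rmin (ly a) (mark b) <= mark b) by (unfold Rmin; destruct Rle_dec; lra).
    apply (proj2 HF a b true false t Ha Hb). congruence.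
    apply rfoot with A; auto; lra. apply lfoot with A; auto; lra.
  - pose proof (mark_aI A mark b HP HF Hb).
    assert (a <> b) by (intro; subst; lra).
    set (t := (Rmax (a (mark a)) (b (mark b)) + ly b) / 2).
    assert (Rmax (a (mark a)) (b (mark b)) < ly b) by (unfold Rmax; destruct Rle_dec; lra).
    assert (a (mark a) <= Rmax (a (mark a)) (b (mark b)) /\ b (mark b) <= Rmax (a (mark a)) (b (mark b))) by (unfold Rmax; destruct Rle_dec; lra).
    apply (proj2 HF a b true true t Ha Hb). congruence.
    apply rfoot with A; auto; unfold t; lra. apply rfoot with A; auto; unfold t; lra.
Qed.

Lemma link_le A mark : PB A -> fast_marks A mark -> forall a b, In a A -> In b A ->
  lx b < lx a < ly b -> mark a <= b (mark b).
Proof.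
  intros HP HF a b Ha Hb Hx. pose proof (mark_aI A mark b HP HF Hb). pose proof (mark_in A mark a HP HF Ha).
  apply Rnot_lt_le. intro Hlt.
  set (lo := Rmax (lx a) (b (mark b))). set (hi := Rmin (mark a) (ly b)).
  assert (lx a <= lo /\ b (mark b) <= lo /\ (lo = lx a \/ lo = b (mark b))) by (unfold lo, Rmax; destruct Rle_dec; lra).
  assert (hi <= mark a /\ hi <= ly b /\ (hi = mark a \/ hi = ly b)) by (unfold hi, Rmin; destruct Rle_dec; lra).
  assert (lo < hi) by lra.
  apply (proj2 HF a b false true ((lo + hi) / 2) Ha Hb). congruence.
  apply lfoot with A; auto; lra. apply rfoot with A; auto; lra.
Qed.

Lemma fold_le (g : (R -> R) -> R) (L : list (R -> R)) : L <> [] ->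
  (forall a, In a L -> positive_bump a /\ inI (g a)) ->
  (forall i, (S i < length L)%nat -> g (nth (S i) L id) <= nth i L id (g (nth i L id))) ->
  forall s, inI s -> g (nth 0 L id) <= s -> last L id (g (last L id)) <= prodC L s.
Proof.
  induction L as [|c L IH]; intros Hne HL Hlink s Hs Hg. congruence.
  destruct (HL c (or_introl eq_refl)) as [Hpc Hgc].
  destruct L as [|c' L].
  - simpl. apply bump_mono; auto.
  - change (last (c :: c' :: L) id) with (last (c' :: L) id).
    unfold prodC. simpl fold_left. apply IH; auto. congruence.
    intros a Ha; apply HL; simpl; auto.
    intros i Hi. apply (Hlink (S i)). simpl in *; lia.
    apply bump_I; auto.
    simpl. apply Rle_trans with (c (g c)). apply (Hlink 0%nat). simpl; lia.
    apply bump_mono; auto.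
Qed.

Lemma fast_chain A : PB A -> geometrically_fast A ->
  forall C, stretched_chain A C -> chain_condition A C.
Proof.
  intros HP [_ [mark HF]] C HC tmin tmax [Hmin1 [Hmin2 Hmin3]] [Hmax1 [Hmax2 Hmax3]].
  change (fast_marks A mark) in HF.
  pose proof HC as [Hne _].
  set (k := pred (length C)).
  assert (Hk : (k < length C)%nat) by (unfold k; destruct C; simpl; [congruence|lia]).
  assert (HinA : forall i, (i < length C)%nat -> In (cc C i) A) by (intros; apply (chain_nth_in A C); auto).
  assert (H1 : tmax <= cc C k (mark (cc C k))).
  { apply Rnot_lt_le; intro Hlt.
    destruct (in_union_idx A C tmax HP HC Hmax2) as [j [Hj Hjt]].
    destruct (chain_xmono' A C j k HP HC) as [_ Hy]; auto. unfold k; lia.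
    apply (noTP_right A mark HP HF (cc C k) tmax (HinA k Hk) Hmax1). lra. }
  assert (H0 : mark (cc C 0) <= tmin).
  { apply Rnot_lt_le; intro Hlt.
    destruct (in_union_idx A C tmin HP HC Hmin2) as [j [Hj Hjt]].
    destruct (chain_xmono' A C 0 j HP HC) as [Hx _]; auto. lia.
    apply (noTP_left A mark HP HF (cc C 0) tmin (HinA 0%nat ltac:(lia)) Hmin1). lra. }
  apply Rle_trans with (1 := H1).
  unfold k. rewrite <- last_nth by auto.
  apply fold_le; auto.
  - intros a Ha. destruct (chain_in A C a HC Ha) as [HaA _]. split; auto.
    pose proof (mark_in A mark a HP HF HaA). pose proof (endsI A a HP HaA). unfold inI; lra.
  - intros i Hi. apply (link_le A mark); [auto|auto|apply HinA; lia|apply HinA; lia|].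
    destruct (chain_link A C i HP HC Hi) as [? [? _]]. lra.
  - apply TP_I with A; auto.
Qed.

Lemma list_min (P : R -> Prop) (l : list R) : (exists t, In t l /\ P t) ->
  exists m, In m l /\ P m /\ forall s, In s l -> P s -> m <= s.
Proof.
  induction l as [|a l IH]; intros [t [Ht Hp]]. destruct Ht.
  destruct (classic (exists t, In t l /\ P t)) as [He|Hn].
  - destruct (IH He) as [m [Hm [Pm Hmin]]].
    destruct (classic (P a)) as [Pa|Pa].
    + destruct (Rle_dec a m).
      * exists a. split; [left; auto|split; auto]. intros s [<-|Hs] Ps; [lra|]. apply Hmin in Hs; auto; lra.
      * exists m. split; [right; auto|split; auto]. intros s [<-|Hs] Ps; [lra|]. auto.
    + exists m. split; [right; auto|split; auto]. intros s [<-|Hs] Ps; [contradiction|]. auto.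
  - destruct Ht as [<-|Ht]; [|exfalso; apply Hn; eauto].
    exists a. split; [left; auto|split; auto]. intros s [<-|Hs] Ps; [lra|]. exfalso; apply Hn; eauto.
Qed.

Lemma list_max (P : R -> Prop) (l : list R) : (exists t, In t l /\ P t) ->
  exists m, In m l /\ P m /\ forall s, In s l -> P s -> s <= m.
Proof.
  induction l as [|a l IH]; intros [t [Ht Hp]]. destruct Ht.
  destruct (classic (exists t, In t l /\ P t)) as [He|Hn].
  - destruct (IH He) as [m [Hm [Pm Hmin]]].
    destruct (classic (P a)) as [Pa|Pa].
    + destruct (Rle_dec m a).
      * exists a. split; [left; auto|split; auto]. intros s [<-|Hs] Ps; [lra|]. apply Hmin in Hs; auto; lra.
      * exists m. split; [right; auto|split; auto]. intros s [<-|Hs] Ps; [lra|]. auto.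
    + exists m. split; [right; auto|split; auto]. intros s [<-|Hs] Ps; [contradiction|]. auto.
  - destruct Ht as [<-|Ht]; [|exfalso; apply Hn; eauto].
    exists a. split; [left; auto|split; auto]. intros s [<-|Hs] Ps; [lra|]. exfalso; apply Hn; eauto.
Qed.

Definition eps (A : hset) : list R := flat_map (fun a => [lx a; ly a]) A.

Lemma TP_eps A t : PB A -> (transition_point A t <-> In t (eps A)).
Proof.
  intro HP. rewrite (TP_iff A t HP). unfold eps. rewrite in_flat_map.
  split; intros [a [Ha He]]; exists a; split; auto; simpl in *; intuition.
Qed.

Lemma TP_min A (P : R -> Prop) : PB A -> (exists t, transition_point A t /\ P t) ->
  exists m, transition_point A m /\ P m /\ forall s, transition_point A s -> P s -> m <= s.
Proof.
  intros HP [t [Ht Hp]]. destruct (list_min P (eps A)) as [m [Hm [Pm Hmin]]].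
  exists t; split; auto; apply TP_eps; auto.
  exists m. split. apply TP_eps; auto. split; auto. intros s Hs Ps. apply Hmin; auto. apply TP_eps; auto.
Qed.

Lemma TP_max A (P : R -> Prop) : PB A -> (exists t, transition_point A t /\ P t) ->
  exists m, transition_point A m /\ P m /\ forall s, transition_point A s -> P s -> s <= m.
Proof.
  intros HP [t [Ht Hp]]. destruct (list_max P (eps A)) as [m [Hm [Pm Hmin]]].
  exists t; split; auto; apply TP_eps; auto.
  exists m. split. apply TP_eps; auto. split; auto. intros s Hs Ps. apply Hmin; auto. apply TP_eps; auto.
Qed.

Definition link (A : hset) (b a : R -> R) : Prop :=
  In b A /\ In a A /\ ~ isolated A b /\ ~ isolated A a /\
  lx b < lx a /\ lx a < ly b /\ ly b < ly a /\
  (forall t, lx a < t < ly b -> ~ transition_point A t).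

Definition least_tp (A : hset) (a : R -> R) (p : R) : Prop :=
  transition_point A p /\ lx a < p < ly a /\
  forall s, transition_point A s -> lx a < s < ly a -> p <= s.

Definition base (A : hset) (a : R -> R) : R :=
  match excluded_middle_informative (exists p, least_tp A a p) with
  | left H => proj1_sig (constructive_indefinite_description _ H)
  | right _ => (lx a + ly a) / 2
  end.

Definition pred (A : hset) (a : R -> R) : option (R -> R) :=
  match excluded_middle_informative (exists b, link A b a) with
  | left H => Some (proj1_sig (constructive_indefinite_description _ H))
  | right _ => None
  end.

Fixpoint mk (A : hset) (n : nat) (a : R -> R) : R :=
  match n with
  | O => base A a
  | S n' => match pred A a with Some b => b (mk A n' b) | None => base A a end
  end.

Definition cnt (A : hset) (a : R -> R) : nat :=
  length (filter (fun c => if Rlt_dec (lx c) (lx a) then true else false) A).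

Definition markA (A : hset) (a : R -> R) : R := mk A (length A) a.

Lemma pred_some A a b : pred A a = Some b -> link A b a.
Proof.
  unfold pred. destruct excluded_middle_informative as [H|H]; [|congruence].
  destruct (constructive_indefinite_description _ H) as [c Hc]. simpl. intro E; inversion E; subst; auto.
Qed.

Lemma pred_none A a : pred A a = None -> ~ exists b, link A b a.
Proof. unfold pred. destruct excluded_middle_informative as [H|H]; [congruence|auto]. Qed.

Lemma isolated_dec_base A a : PB A -> In a A -> ~ isolated A a -> least_tp A a (base A a).
Proof.
  intros HP Ha Hni. unfold base. destruct excluded_middle_informative as [H|H].
  - destruct (constructive_indefinite_description _ H) as [p Hp]; simpl; auto.
  - exfalso. apply H. apply (TP_min A (fun t => lx a < t < ly a) HP).
    apply NNPP; intro Hn. apply Hni. intros x y Hb t Ht Htp.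
    destruct (ends_eq a x y Hb); subst. apply Hn; eauto.
Qed.

Lemma base_iso A a : isolated A a -> In a A -> PB A -> base A a = (lx a + ly a) / 2.
Proof.
  intros Hi Ha HP. unfold base. destruct excluded_middle_informative as [H|H]; auto.
  exfalso. destruct H as [p [Hp [Hr _]]]. apply (Hi (lx a) (ly a) (PB_supp A a HP Ha) p Hr Hp).
Qed.

Lemma pred_unique A b b' a : PB A -> geometrically_proper A -> link A b a -> link A b' a -> b = b'.
Proof.
  intros HP [_ Hpr] [Hb [Ha [_ [_ [H1 [H2 [H3 H4]]]]]]] [Hb' [_ [_ [_ [G1 [G2 [G3 G4]]]]]]].
  assert (ly b = ly b').
  { destruct (Rtotal_order (ly b) (ly b')) as [Hl|[He|Hl]]; auto.
    - exfalso. apply (G4 (ly b)). lra. apply TP_iff; auto. exists b; auto.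
    - exfalso. apply (H4 (ly b')). lra. apply TP_iff; auto. exists b'; auto. }
  apply (Hpr b b' (lx b) (lx b') (ly b)); auto. apply PB_supp with A; auto.
  rewrite H. apply PB_supp with A; auto.
Qed.

Lemma filter_lt {T} (f g : T -> bool) (l : list T) c0 :
  (forall c, f c = true -> g c = true) -> In c0 l -> g c0 = true -> f c0 = false ->
  (length (filter f l) < length (filter g l))%nat.
Proof.
  intros Hfg. induction l as [|c l IH]; intros Hin Hg Hf. destruct Hin.
  assert (Hle : forall l', (length (filter f l') <= length (filter g l'))%nat).
  { induction l' as [|d l' IH']; simpl; auto. destruct (f d) eqn:E. rewrite (Hfg d E). simpl; lia.
    destruct (g d); simpl; lia. }
  destruct Hin as [<-|Hin]; simpl.
  - rewrite Hf, Hg. simpl. specialize (Hle l). lia.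
  - specialize (IH Hin Hg Hf). destruct (f c) eqn:E. rewrite (Hfg c E). simpl; lia.
    destruct (g c); simpl; lia.
Qed.

Lemma cnt_lt A b a : link A b a -> (cnt A b < cnt A a)%nat.
Proof.
  intros [Hb [_ [_ [_ [H1 _]]]]]. unfold cnt. apply filter_lt with b; [|exact Hb| |].
  all: repeat (first [intro | destruct Rlt_dec]); try congruence; try lra; auto.
Qed.

Lemma cnt_bound A a : In a A -> (cnt A a < length A)%nat.
Proof.
  intros Ha. unfold cnt.
  assert (E : length A = length (filter (fun _ => true) A)) by (rewrite filter_true; auto).
  rewrite E. apply filter_lt with a; auto.
  destruct Rlt_dec; auto. lra.
Qed.

Lemma mk_step A : forall n a, (cnt A a < n)%nat -> mk A n a = mk A (S n) a.
Proof.
  induction n as [|n IH]; intros a Ha. lia.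
  change (mk A (S n) a) with (match pred A a with Some b => b (mk A n b) | None => base A a end).
  change (mk A (S (S n)) a) with (match pred A a with Some b => b (mk A (S n) b) | None => base A a end).
  destruct (pred A a) as [b|] eqn:E; auto.
  rewrite <- IH; auto. pose proof (cnt_lt A b a (pred_some A a b E)). lia.
Qed.

Lemma mk_stable A n m a : (cnt A a < n)%nat -> (n <= m)%nat -> mk A n a = mk A m a.
Proof.
  intros Hn Hm. induction Hm; auto. rewrite IHHm. apply mk_step. lia.
Qed.

Lemma mark_link A b a : PB A -> geometrically_proper A -> link A b a -> markA A a = b (markA A b).
Proof.
  intros HP Hpr Hl. pose proof (cnt_lt A b a Hl) as Hc.
  pose proof Hl as [Hb [Ha _]]. pose proof (cnt_bound A a Ha) as Hca.
  unfold markA. destruct (length A) as [|N] eqn:EN. lia.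
  simpl. destruct (pred A a) as [b'|] eqn:E.
  - pose proof (pred_some A a b' E). assert (b' = b) by (apply (pred_unique A b' b a); auto). subst b'.
    f_equal. exact (mk_stable A N (S N) b ltac:(lia) ltac:(lia)).
  - exfalso. apply (pred_none A a E). eauto.
Qed.

Lemma mark_nopred A a : ~ (exists b, link A b a) -> markA A a = base A a.
Proof.
  intros Hn. unfold markA. destruct (length A); simpl; auto.
  destruct (pred A a) eqn:E; auto. exfalso; apply Hn. exists r. apply pred_some; auto.
Qed.

Lemma chain_link' A C i : PB A -> stretched_chain A C -> (S i < length C)%nat ->
  link A (cc C i) (cc C (S i)).
Proof.
  intros HP HC Hi. destruct (chain_link A C i HP HC Hi) as [? [? [? ?]]].
  destruct (chain_nth_in A C i HC) as [? ?]. lia.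
  destruct (chain_nth_in A C (S i) HC) as [? ?]. lia.
  unfold link; tauto.
Qed.

Lemma cons_chain A C b : PB A -> stretched_chain A C -> link A b (cc C O) -> stretched_chain A (b :: C).
Proof.
  intros HP HC Hl. pose proof HC as [Hne [Hel Hidx]].
  pose proof Hl as [Hb [_ [Hbi [_ [H1 [H2 [H3 H4]]]]]]].
  split; [congruence|split].
  - intros a [<-|Ha]; auto.
  - intros [|i] xi yi xj yj Hi Hbi1 Hbj.
    + simpl in Hbi1, Hbj. destruct (ends_eq _ _ _ Hbi1), (ends_eq _ _ _ Hbj). subst.
      repeat split; try lra. auto.
    + simpl in Hi, Hbi1, Hbj. apply (Hidx i); auto. lia.
Qed.

Lemma max_chain_head A C : PB A -> maximal_stretched_chain A C -> ~ exists b, link A b (cc C O).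
Proof.
  intros HP [HC Hmax] [b Hl].
  assert (HC' := cons_chain A C b HP HC Hl).
  assert (Hb : In b C) by (apply (Hmax (b :: C)); simpl; auto).
  destruct (In_nth C b id Hb) as [j [Hj Hn]].
  destruct (chain_xmono' A C 0 j HP HC) as [Hx _]; auto. lia.
  rewrite Hn in Hx. destruct Hl as [_ [_ [_ [_ [H1 _]]]]]. lra.
Qed.

Lemma fold_eq (g : (R -> R) -> R) (L : list (R -> R)) : L <> [] ->
  (forall i, (S i < length L)%nat -> g (nth (S i) L id) = nth i L id (g (nth i L id))) ->
  prodC L (g (nth 0 L id)) = last L id (g (last L id)).
Proof.
  induction L as [|c L IH]; intros Hne Hlink. congruence.
  destruct L as [|c' L].
  - reflexivity.
  - change (last (c :: c' :: L) id) with (last (c' :: L) id).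
    unfold prodC. simpl fold_left. pose proof (Hlink 0%nat ltac:(simpl; lia)) as E; simpl in E. rewrite <- E.
    apply IH. congruence.
    intros i Hi. apply (Hlink (S i)). simpl in *; lia.
Qed.

Definition chain_cond3 A := forall C, maximal_stretched_chain A C -> chain_condition A C.

Lemma chain_analysis A C : PB A -> geometrically_proper A -> chain_cond3 A ->
  maximal_stretched_chain A C -> forall i, (i < length C)%nat ->
  lx (cc C i) < markA A (cc C i) < ly (cc C i) /\
  (forall s, transition_point A s -> ~ (lx (cc C i) < s < markA A (cc C i))) /\
  (forall s, transition_point A s -> ~ (cc C i (markA A (cc C i)) < s < ly (cc C i))).
Proof.
  intros HP Hpr H3 HM. pose proof HM as [HC _]. pose proof HC as [Hne _].
  set (t := fun i => markA A (cc C i)).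
  set (k := Init.Nat.pred (length C)).
  assert (Hk : (k < length C)%nat) by (unfold k; destruct C; simpl; [congruence|lia]).
  assert (Hkmax : forall i, (i < length C)%nat -> (i <= k)%nat) by (intros; unfold k; lia).
  assert (HinA : forall i, (i < length C)%nat -> In (cc C i) A) by (intros; apply (chain_nth_in A C); auto).
  assert (Hsupp : forall i, (i < length C)%nat -> bump_supp (cc C i) (lx (cc C i)) (ly (cc C i)))
    by (intros; apply PB_supp with A; auto).
  assert (Hpos : forall i, (i < length C)%nat -> positive_bump (cc C i)) by (intros; apply HP; auto).
  assert (F4 : forall i, (S i < length C)%nat -> t (S i) = cc C i (t i)).
  { intros i Hi. unfold t. apply mark_link; auto. apply chain_link'; auto. }
  assert (F3 : least_tp A (cc C O) (t O)).
  { unfold t. rewrite mark_nopred by (apply max_chain_head; auto).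
    apply isolated_dec_base; auto. apply HinA; lia. apply (chain_nth_in A C 0 HC); lia. }
  assert (Hcmin : is_Cmin A C (t O)).
  { destruct F3 as [Ht [Hr Hl]]. split; auto. split.
    exists (cc C O), (lx (cc C O)), (ly (cc C O)). split. apply nth_In; lia. split; auto. apply Hsupp; lia.
    intros s Hs Hu. destruct (in_union_idx A C s HP HC Hu) as [j [Hj Hjs]].
    destruct (chain_xmono' A C 0 j HP HC) as [Hx _]; auto. lia.
    apply Rnot_lt_le; intro Hlt. specialize (Hl s Hs). lra. }
  destruct (TP_max A (in_union_supp C) HP) as [tmax [Hm1 [Hm2 Hm3]]].
  { exists (t O). destruct Hcmin as [? [? _]]; auto. }
  assert (Hcc : tmax <= prodC C (t O)) by (apply (H3 C HM (t O) tmax Hcmin); split; auto).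
  assert (Hprod : prodC C (t O) = cc C k (t k)).
  { unfold t, k. rewrite <- last_nth by auto. apply fold_eq; auto. }
  assert (IN : forall i, (i < length C)%nat -> lx (cc C i) < t i < ly (cc C i)).
  { induction i as [|i IH]; intros Hi.
    - destruct F3 as [_ [Hr _]]; auto.
    - specialize (IH ltac:(lia)).
      destruct (chain_link A C i HP HC Hi) as [L1 [L2 [L3 L4]]].
      pose proof (bump_in (cc C i) _ _ (t i) (Hpos i ltac:(lia)) (Hsupp i ltac:(lia)) IH) as Hb.
      rewrite (F4 i Hi). split; [|lra].
      apply Rnot_le_lt. intro Hle. rewrite <- (F4 i Hi) in Hle.
      assert (H0i : 0 <= lx (cc C i)) by (destruct (Hsupp i ltac:(lia)) as [? _]; auto).
      assert (HI : inI (t (S i))) by (rewrite (F4 i Hi); destruct (Hsupp (S i) Hi) as [? [? [? _]]]; unfold inI; lra).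
      assert (Hfix : forall j, (j < length C)%nat -> (S i <= j)%nat -> cc C j (t (S i)) = t (S i)).
      { intros j Hj Hij. apply (bump_fix _ (lx (cc C j)) (ly (cc C j))); auto.
        destruct (chain_xmono' A C (S i) j HP HC) as [Hx _]; auto. lra. }
      assert (Hconst : forall j, (j < length C)%nat -> (S i <= j)%nat -> t j = t (S i)).
      { intros j Hj Hij. induction Hij; auto.
        rewrite F4 by auto. rewrite IHHij by lia. apply Hfix; lia. }
      assert (Hpr' : prodC C (t O) = t (S i)).
      { rewrite Hprod. rewrite Hconst by (auto; lia). apply Hfix; auto; lia. }
      assert (ly (cc C i) <= tmax).
      { apply Hm3. apply TP_iff; auto. exists (cc C i). split; auto. apply HinA; lia.
        exists (cc C (S i)), (lx (cc C (S i))), (ly (cc C (S i))). split. apply nth_In; auto.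
        split; auto; try lra. }
      lra. }
  intros i Hi. split; [apply IN; auto|split].
  - intros s Hs Hr. destruct i as [|i].
    + destruct F3 as [_ [_ Hl]]. specialize (Hl s Hs). fold (t O%nat) in Hr.
      assert (lx (cc C O) < s < ly (cc C O)) by (pose proof (IN 0%nat Hi); lra). specialize (Hl H). lra.
    + destruct (chain_link A C i HP HC Hi) as [L1 [L2 [L3 L4]]].
      pose proof (bump_in (cc C i) _ _ (t i) (Hpos i ltac:(lia)) (Hsupp i ltac:(lia)) (IN i ltac:(lia))) as Hb.
      fold (t (S i)) in Hr. rewrite (F4 i Hi) in Hr. apply (L4 s); auto. lra.
  - intros s Hs Hr. fold (t i) in Hr.
    destruct (Nat.eq_dec i k) as [->|Hne'].
    + assert (s <= tmax).
      { apply Hm3; auto. exists (cc C k), (lx (cc C k)), (ly (cc C k)). split. apply nth_In; auto.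
        split; auto. pose proof (IN k Hk).
        pose proof (bump_in (cc C k) _ _ (t k) (Hpos k Hk) (Hsupp k Hk) (IN k Hk)). lra. }
      lra.
    + assert (Hi' : (S i < length C)%nat) by (pose proof (Hkmax i Hi); unfold k in *; lia).
      destruct (chain_link A C i HP HC Hi') as [L1 [L2 [L3 L4]]].
      pose proof (IN (S i) Hi'). rewrite (F4 i Hi') in H.
      apply (L4 s); auto. lra.
Qed.

Lemma best_exists (P : list (R -> R) -> Prop) N : (exists C, P C) ->
  (forall C, P C -> (length C <= N)%nat) ->
  exists C, P C /\ forall C', P C' -> (length C' <= length C)%nat.
Proof.
  intros [C0 H0] Hb.
  assert (K : forall k C, P C -> (N <= length C + k)%nat ->
    exists C, P C /\ forall C', P C' -> (length C' <= length C)%nat).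
  { induction k as [|k IH]; intros C HC Hk.
    - exists C. split; auto. intros C' HC'. specialize (Hb C' HC'). lia.
    - destruct (classic (exists C', P C' /\ (length C < length C')%nat)) as [[C' [HC' Hl]]|Hn].
      + apply (IH C'); auto. lia.
      + exists C. split; auto. intros C' HC'. apply Nat.nlt_ge. intro Hl. apply Hn; eauto. }
  apply (K N C0); auto. lia.
Qed.

Lemma single_chain A a : In a A -> ~ isolated A a -> stretched_chain A [a].
Proof.
  intros Ha Hi. split; [congruence|split].
  - intros b [<-|[]]; auto.
  - intros i xi yi xj yj Hlt. simpl in Hlt. lia.
Qed.

Lemma exists_maximal A a : PB A -> In a A -> ~ isolated A a ->
  exists C, maximal_stretched_chain A C /\ In a C.
Proof.
  intros HP Ha Hi.
  destruct (best_exists (fun C => stretched_chain A C /\ In a C) (length A)) as [C [[HC HaC] Hbest]].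
  - exists [a]. split. apply single_chain; auto. simpl; auto.
  - intros C [HC _]. apply NoDup_incl_length. apply (chain_nodup A C HP HC).
    intros b Hb. apply (chain_in A C b HC Hb).
  - exists C. split; auto. split; auto. intros C' HC' Hincl.
    apply NoDup_length_incl. apply (chain_nodup A C HP HC).
    apply Hbest. split; auto. exact Hincl.
Qed.

Definition good A (m : (R -> R) -> R) a :=
  lx a < m a < ly a /\
  (forall s, transition_point A s -> ~ (lx a < s < m a)) /\
  (forall s, transition_point A s -> ~ (a (m a) < s < ly a)).

Lemma all_good A a : PB A -> geometrically_proper A -> chain_cond3 A -> In a A -> good A (markA A) a.
Proof.
  intros HP Hpr H3 Ha. destruct (classic (isolated A a)) as [Hiso|Hni].
  - assert (E : markA A a = (lx a + ly a) / 2).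
    { rewrite mark_nopred. apply base_iso; auto.
      intros [b [_ [_ [_ [Hn _]]]]]. contradiction. }
    pose proof (PB_supp A a HP Ha) as Hs. pose proof Hs as [_ [Hxy _]].
    pose proof (bump_in a _ _ (markA A a) (HP a Ha) Hs ltac:(rewrite E; lra)).
    split; [rewrite E; lra|split].
    + intros s Hts Hr. apply (Hiso _ _ Hs s); auto. rewrite E in Hr; lra.
    + intros s Hts Hr. apply (Hiso _ _ Hs s); auto. rewrite E in *; lra.
  - destruct (exists_maximal A a HP Ha Hni) as [C [HM HaC]].
    destruct (In_nth C a id HaC) as [i [Hi Hn]].
    pose proof (chain_analysis A C HP Hpr H3 HM i Hi) as G. rewrite Hn in G. exact G.
Qed.

Lemma foot_l A a m t : PB A -> In a A -> foot a m false t -> lx a < t < m.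
Proof. intros HP Ha [x [y [Hb Ht]]]. destruct (ends_eq a x y Hb); subst; auto. Qed.

Lemma foot_r A a m t : PB A -> In a A -> foot a m true t -> a m <= t < ly a.
Proof. intros HP Ha [x [y [Hb Ht]]]. destruct (ends_eq a x y Hb); subst; auto. Qed.

Lemma TPa A a : PB A -> In a A -> transition_point A (lx a) /\ transition_point A (ly a).
Proof. intros HP Ha. split; apply TP_iff; auto; exists a; auto. Qed.

Lemma feet_ll A m a b t : PB A -> geometrically_proper A -> In a A -> In b A -> a <> b ->
  good A m a -> good A m b -> lx a < t < m a -> lx b < t < m b -> False.
Proof.
  intros HP [Hp1 _] Ha Hb Hab [Ga1 [Ga2 Ga3]] [Gb1 [Gb2 Gb3]] Ht1 Ht2.
  destruct (Rtotal_order (lx a) (lx b)) as [Hl|[He|Hl]].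
  - apply (Ga2 (lx b)). apply TPa; auto. lra.
  - apply Hab. apply (Hp1 a b (lx a) (ly a) (ly b)); auto. apply PB_supp with A; auto.
    rewrite He. apply PB_supp with A; auto.
  - apply (Gb2 (lx a)). apply TPa; auto. lra.
Qed.

Lemma feet_rr A m a b t : PB A -> geometrically_proper A -> In a A -> In b A -> a <> b ->
  good A m a -> good A m b -> a (m a) <= t < ly a -> b (m b) <= t < ly b -> False.
Proof.
  intros HP [_ Hp2] Ha Hb Hab [Ga1 [Ga2 Ga3]] [Gb1 [Gb2 Gb3]] Ht1 Ht2.
  destruct (Rtotal_order (ly a) (ly b)) as [Hl|[He|Hl]].
  - apply (Gb3 (ly a)). apply TPa; auto. lra.
  - apply Hab. apply (Hp2 a b (lx a) (lx b) (ly a)); auto. apply PB_supp with A; auto.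
    rewrite He. apply PB_supp with A; auto.
  - apply (Ga3 (ly b)). apply TPa; auto. lra.
Qed.

Lemma feet_lr A a b t : PB A -> geometrically_proper A -> chain_cond3 A -> In a A -> In b A ->
  lx a < t < markA A a -> b (markA A b) <= t < ly b -> False.
Proof.
  intros HP Hpr H3 Ha Hb Ht1 Ht2.
  pose proof (all_good A a HP Hpr H3 Ha) as [Ga1 [Ga2 Ga3]].
  pose proof (all_good A b HP Hpr H3 Hb) as [Gb1 [Gb2 Gb3]].
  pose proof (bump_in a _ _ (markA A a) (HP a Ha) (PB_supp A a HP Ha) Ga1) as Ba.
  pose proof (bump_in b _ _ (markA A b) (HP b Hb) (PB_supp A b HP Hb) Gb1) as Bb.
  destruct (classic (a = b)) as [<-|Hab]. lra.
  destruct Hpr as [Hp1 Hp2].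
  assert (Hx : lx b < lx a).
  { destruct (Rtotal_order (lx a) (lx b)) as [Hl|[He|Hl]]; auto.
    - exfalso. apply (Ga2 (lx b)). apply TPa; auto. lra.
    - exfalso. apply Hab. apply (Hp1 a b (lx a) (ly a) (ly b)); auto. apply PB_supp with A; auto.
      rewrite He. apply PB_supp with A; auto. }
  assert (Hy1 : markA A a <= ly b).
  { apply Rnot_lt_le. intro. apply (Ga2 (ly b)). apply TPa; auto. lra. }
  assert (Hy : ly b < ly a).
  { destruct (Rtotal_order (ly a) (ly b)) as [Hl|[He|Hl]]; auto.
    - exfalso. apply (Gb3 (ly a)). apply TPa; auto. lra.
    - exfalso. apply Hab. apply (Hp2 a b (lx a) (lx b) (ly a)); auto. apply PB_supp with A; auto.
      rewrite He. apply PB_supp with A; auto. }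
  assert (Hl : link A b a).
  { split; auto. split; auto. split; [|split].
    - intro Hi. apply (Hi _ _ (PB_supp A b HP Hb) (lx a)). lra. apply TPa; auto.
    - intro Hi. apply (Hi _ _ (PB_supp A a HP Ha) (ly b)). lra. apply TPa; auto.
    - split; [lra|split; [lra|split; [lra|]]].
      intros s Hs Hts. destruct (Rlt_le_dec s (markA A a)).
      + apply (Ga2 s); auto. lra.
      + apply (Gb3 s); auto. lra. }
  assert (E := mark_link A b a HP (conj Hp1 Hp2) Hl). lra.
Qed.

Lemma cond3_fast A : PB A -> geometrically_proper A -> chain_cond3 A -> geometrically_fast A.
Proof.
  intros HP Hpr H3. split; auto. exists (markA A). split.
  - intros a Ha. exists (lx a), (ly a). split. apply PB_supp with A; auto.
    apply (all_good A a HP Hpr H3 Ha).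
  - intros a b sa sb t Ha Hb Hne Fa Fb.
    destruct sa, sb.
    + apply (feet_rr A (markA A) a b t HP Hpr Ha Hb); try (apply all_good; auto).
      intro; subst; auto. apply foot_r with A; auto. apply foot_r with A; auto.
    + apply (feet_lr A b a t HP Hpr H3 Hb Ha). apply foot_l with A; auto. apply foot_r with A; auto.
    + apply (feet_lr A a b t HP Hpr H3 Ha Hb). apply foot_l with A; auto. apply foot_r with A; auto.
    + apply (feet_ll A (markA A) a b t HP Hpr Ha Hb); try (apply all_good; auto).
      intro; subst; auto. apply foot_l with A; auto. apply foot_l with A; auto.
Qed.

Theorem proposition4p2 (A : hset) :
  (forall a, In a A -> positive_bump a) ->
  geometrically_proper A ->
  (geometrically_fast A <->
     (forall C, stretched_chain A C -> chain_condition A C)) /\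
  ((forall C, stretched_chain A C -> chain_condition A C) <->
     (forall C, maximal_stretched_chain A C -> chain_condition A C)).
Proof.
  intros HP Hpr.
  assert (H23 : (forall C, stretched_chain A C -> chain_condition A C) ->
                (forall C, maximal_stretched_chain A C -> chain_condition A C)).
  { intros H C [HC _]; auto. }
  assert (H31 : (forall C, maximal_stretched_chain A C -> chain_condition A C) -> geometrically_fast A).
  { intros H. apply cond3_fast; auto. }
  assert (H12 : geometrically_fast A -> (forall C, stretched_chain A C -> chain_condition A C)).
  { intros H. apply fast_chain; auto. }
  split; split; auto.
Qed.
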